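(* Let $R,S$ be finite nonempty sets, $k$ a positive integer, $p_r>0$ ($r\in R$), $T=\sum_{r\in R}p_r$, $d_{r,s}\ge0$, and $\kappa<0$. Let $F$ be the set of $(\mathbf x,\mathbf y)$ with $x_s,y_{r,s}\in\{0,1\}$, $\sum_{s\in S}x_s=k$, $y_{r,s}\le x_s$, and $\sum_{s\in S}y_{r,s}=1$ for all $r$. For $\mathbf y$ let $\overline{\mathcal K}(\mathbf y)=\sum_{r,s}p_ry_{r,s}e^{-\kappa d_{r,s}}$ and $\mathcal K(\mathbf y)=-\frac1\kappa\ln\left(\frac1T\overline{\mathcal K}(\mathbf y)\right)$. Let $U\subseteq S$, $c_s\ge0$ for $s\in U$, $\sigma(\mathbf x)=\sum_{s\in U}c_sx_s$. Let $(\mathbf x^{all},\mathbf y^{all})$ be an optimal solution of $\min\{\overline{\mathcal K}(\mathbf y):(\mathbf x,\mathbf y)\in F\}$, and set $\mathcal K^{all}=\mathcal K(\mathbf y^{all})$ and $\sigma^{all}=\sigma(\mathbf x^{all})$. Set $\hat{\mathcal K}=\mathcal K^{all}$ and let $(\mathbf x^*,\mathbf y^*,v^*,q^* )$ be optimal for \[ \text{(KPL}^p)\quad \min\ \overline{\mathcal K}(\mathbf y)+Te^{-\kappa\hat{\mathcal K}}(v-1)\ \text{ s.t. } (\mathbf x,\mathbf y)\in F,\ v\ge e^{q},\ q=-\kappa\,\sigma(\mathbf x). \] Let $\sigma^*=\sigma(\mathbf x^* )$, $\mathcal K^*=\mathcal K(\mathbf y^* )$, $\Delta=\hat{\mathcal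 K}-\mathcal K^*$, and define $\hat\sigma$ by \[ \mathcal K^*+\hat\sigma=-\frac1\kappa\ln\left(\frac1T\left(\overline{\mathcal K}(\mathbf y^* )+Te^{-\kappa\hat{\mathcal K}}\left(e^{-\kappa\sigma^*}-1\right)\right)\right). \] Then the penalized locations are under-penalized, i.e. $\hat\sigma\le\sigma^*$, and \[ \sigma^*-\hat\sigma\le|\Delta|\left(1-e^{\kappa\sigma^*}\right)\le\sigma^{all}\left(1-e^{\kappa\sigma^*}\right)\le\sigma^{all}\left(1-e^{\kappa\sigma^{all}}\right). \]
   Context: $U$ is a set of less desirable potential locations, $c_s$ is the penalty (in distance units) for selecting $s\in U$; $\hat\sigma$ is the penalty actually applied to the optimal Kolm–Pollak score by (KPL$^p$), whose parameter $\hat{\mathcal K}$ approximates the optimal unpenalized Kolm–Pollak score $\mathcal K^*$. *)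

(* Defs.v *)
From mathcomp Require Import all_boot all_order all_algebra.
From mathcomp Require Import all_classical all_reals all_analysis.
Set Implicit Arguments. Unset Strict Implicit. Unset Printing Implicit Defensive.
Import Order.TTheory GRing.Theory Num.Theory.
Local Open Scope ring_scope.

Section KP.
Variables (R : realType) (Dm Loc : finType).

Definition feasible (k : nat) (x : Loc -> bool) (y : Dm -> Loc -> bool) : Prop :=
  [/\ (\sum_(s : Loc) (x s : nat))%N = k,
      (forall r s, y r s ==> x s) &
      (forall r, (\sum_(s : Loc) (y r s : nat))%N = 1%N)].

Definition Ttot (p : Dm -> R) : R := \sum_(r : Dm) p r.

Definition Kbar (p : Dm -> R) (d : Dm -> Loc -> R) (kappa : R)
    (y : Dm -> Loc -> bool) : R :=
  \sum_(r : Dm) \sum_(s : Loc) p r * (y r s)%:R * expR (- kappa * d r s).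

Definition KP (p : Dm -> R) (d : Dm -> Loc -> R) (kappa : R)
    (y : Dm -> Loc -> bool) : R :=
  - kappa^-1 * ln ((Ttot p)^-1 * Kbar p d kappa y).

Definition sigma (U : {set Loc}) (c : Loc -> R) (x : Loc -> bool) : R :=
  \sum_(s in U) c s * (x s)%:R.

Definition KPLp_obj (p : Dm -> R) (d : Dm -> Loc -> R) (kappa Khat : R)
    (y : Dm -> Loc -> bool) (v : R) : R :=
  Kbar p d kappa y + Ttot p * expR (- kappa * Khat) * (v - 1).

Definition KPLp_feasible (k : nat) (U : {set Loc}) (c : Loc -> R) (kappa : R)
    (x : Loc -> bool) (y : Dm -> Loc -> bool) (v q : R) : Prop :=
  [/\ feasible k x y, expR q <= v & q = - kappa * sigma U c x].

End KP.

(* Main.v *)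
Require Import Defs.
From mathcomp Require Import all_boot all_order all_algebra.
From mathcomp Require Import all_classical all_reals all_analysis.
From mathcomp Require Import ring lra.
Import Order.TTheory GRing.Theory Num.Theory.
Local Open Scope ring_scope.

Lemma conv_ineq (R : realType) (lam u : R) : 0 <= lam -> lam <= 1 ->
  expR (lam * u) <= (1 - lam) + lam * expR u.
Proof.
move=> l0 l1.
have P : Itv.spec (@Itv.num_sem R) (Itv.Real `[0%Z, 1%Z]) lam.
  by rewrite /= /Itv.num_sem /= in_itv /= l0 l1 ger0_real.
have := convex_expR (@Itv.Def R _ _ lam P) u 0.
by rewrite !convRE /= expR0 mulr0 addr0 mulr1 addrC.
Qed.

Theorem theorem4 (R : realType) (Dm Loc : finType)
  (hDm : (0 < #|Dm|)%N) (hLoc : (0 < #|Loc|)%N)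
  (k : nat) (hk : (0 < k)%N)
  (p : Dm -> R) (hp : forall r, 0 < p r)
  (d : Dm -> Loc -> R) (hd : forall r s, 0 <= d r s)
  (kappa : R) (hkappa : kappa < 0)
  (U : {set Loc}) (c : Loc -> R) (hc : forall s, s \in U -> 0 <= c s)
  (xall : Loc -> bool) (yall : Dm -> Loc -> bool)
  (hall_feas : feasible k xall yall)
  (hall_opt : forall x y, feasible k x y -> Kbar p d kappa yall <= Kbar p d kappa y)
  (xs : Loc -> bool) (ys : Dm -> Loc -> bool) (vs qs : R)
  (hs_feas : KPLp_feasible k U c kappa xs ys vs qs)
  (hs_opt : forall x y v q, KPLp_feasible k U c kappa x y v q ->
      KPLp_obj p d kappa (KP p d kappa yall) ys vs
        <= KPLp_obj p d kappa (KP p d kappa yall) y v)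
  (sighat : R)
  (hsighat : KP p d kappa ys + sighat =
     - kappa^-1 * ln ((Ttot p)^-1 *
        (Kbar p d kappa ys + Ttot p * expR (- kappa * KP p d kappa yall)
                              * (expR (- kappa * sigma U c xs) - 1)))) :
  let Khat := KP p d kappa yall in
  let sigall := sigma U c xall in
  let sigs := sigma U c xs in
  let Ks := KP p d kappa ys in
  let Delta := Khat - Ks in
  [/\ sighat <= sigs,
      sigs - sighat <= `|Delta| * (1 - expR (kappa * sigs)),
      `|Delta| * (1 - expR (kappa * sigs)) <= sigall * (1 - expR (kappa * sigs)) &
      sigall * (1 - expR (kappa * sigs)) <= sigall * (1 - expR (kappa * sigall))].
Proof.
move=> Khat sigall sigs Ks Delta.
have knz : kappa != 0 by exact: ltr0_neq0.
have ka : 0 < - kappa by rewrite oppr_gt0.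
have [r0 _] := card_gt0P hDm.
have Tpos : 0 < Ttot p.
  rewrite /Ttot (bigD1 r0) //=; apply: (lt_le_trans (hp r0)).
  by rewrite lerDl sumr_ge0 // => r _; exact: ltW.
have Kpos : forall x y, feasible k x y -> 0 < Kbar p d kappa y.
  move=> x y [_ _ hy]; rewrite /Kbar (bigD1 r0) //=.
  case: (pickP (y r0)) => [s0 hs0 | h0]; last first.
    by move: (hy r0); rewrite big1 // => s _; rewrite h0.
  rewrite (bigD1 s0) //= hs0 -addrA.
  apply: (lt_le_trans (_ : 0 < p r0 * 1%:R * expR (- kappa * d r0 s0))).
    by rewrite mulr1 mulr_gt0 // expR_gt0.
  rewrite lerDl; apply: addr_ge0; apply: sumr_ge0.
    by move=> s _; apply: mulr_ge0; [apply: mulr_ge0; [exact: ltW | exact: ler0n] | exact: expR_ge0].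
  by move=> r _; rewrite sumr_ge0 // => s _; apply: mulr_ge0; [apply: mulr_ge0; [exact: ltW | exact: ler0n] | exact: expR_ge0].
have sig0 : forall x, 0 <= sigma U c x.
  by move=> x; rewrite /sigma sumr_ge0 // => s hs; rewrite mulr_ge0 ?hc.
have EK : forall x y, feasible k x y ->
    expR (- kappa * KP p d kappa y) = (Ttot p)^-1 * Kbar p d kappa y.
  move=> x y hf; rewrite /KP mulrA mulrNN mulfV // mul1r lnK // posrE.
  by rewrite mulr_gt0 ?invr_gt0 // (Kpos _ _ hf).
case: (hs_feas) => hsf hv hq.
pose T := Ttot p.
pose A := expR (- kappa * Khat).
pose B := expR (- kappa * Ks).
pose Es := expR (- kappa * sigs).
pose Eall := expR (- kappa * sigall).
pose Eh := expR (- kappa * sighat).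
have Apos : 0 < A by exact: expR_gt0.
have Bpos : 0 < B by exact: expR_gt0.
have Ehpos : 0 < Eh by exact: expR_gt0.
have Espos : 0 < Es by exact: expR_gt0.
have hKa : Kbar p d kappa yall = T * A.
  by rewrite /A /Khat (EK _ _ hall_feas) mulrA mulfV ?mul1r // lt0r_neq0.
have hKs : Kbar p d kappa ys = T * B.
  by rewrite /B /Ks (EK _ _ hsf) mulrA mulfV ?mul1r // lt0r_neq0.
have hAB : A <= B.
  by rewrite -(ler_pM2l Tpos) -hKa -hKs; exact: hall_opt hsf.
have KhKs : Khat <= Ks by move: hAB; rewrite ler_expR ler_pM2l.
have Es1 : 1 <= Es by rewrite /Es -expR0 ler_expR mulr_ge0 ?sig0 ?(ltW ka).
have hsig : B * Eh = B + A * (Es - 1).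
  have e1 : - kappa * (Ks + sighat) = ln (B + A * (Es - 1)).
    rewrite hsighat mulrA mulrNN mulfV // mul1r; congr ln.
    rewrite -/T -/Khat -/A hKs -/sigs -/Es; field; exact: lt0r_neq0.
  move: (congr1 expR e1); rewrite lnK; last first.
    rewrite posrE; apply: (lt_le_trans Bpos); rewrite lerDl.
    by apply: mulr_ge0; [exact: ltW | rewrite subr_ge0].
  by rewrite mulrDr expRD.
have hopt := hs_opt xall yall (expR (- kappa * sigall)) (- kappa * sigall)
  (And3 hall_feas (lexx (expR (- kappa * sigall))) erefl).
have H1 : B + A * (Es - 1) <= A * Eall.
  have H1' : T * (B + A * (vs - 1)) <= T * (A * Eall).
    move: hopt; rewrite /KPLp_obj hKa hKs -/T -/Khat -/A -/sigall -/Eall.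
    have -> : T * B + T * A * (vs - 1) = T * (B + A * (vs - 1)) by ring.
    by have -> : T * A + T * A * (Eall - 1) = T * (A * Eall) by ring.
  rewrite ler_pM2l // in H1'; apply: le_trans H1'.
  rewrite lerD2l ler_wpM2l ?(ltW Apos) // lerD2r.
  by rewrite hq in hv.
have sigs_all : sigs <= sigall.
  have : A * Es <= A * Eall.
    apply: le_trans H1.
    have -> : A * Es = A + A * (Es - 1) by ring.
    by rewrite lerD2r.
  by rewrite ler_pM2l // ler_expR ler_pM2l.
have lamE : expR (kappa * sigs) = Es^-1 by rewrite /Es mulNr expRN invrK.
have lam0 : 0 <= 1 - expR (kappa * sigs).
  by rewrite subr_ge0 lamE invr_le1 // ?unitfE ?lt0r_neq0.
have lam1 : 1 - expR (kappa * sigs) <= 1 by rewrite lerBlDr lerDl expR_ge0.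
have dE : `|Delta| = Ks - Khat by rewrite /Delta ler0_norm ?subr_le0 // opprB.
split.
- have : B * Eh <= B * Es.
    rewrite hsig; have -> : B * Es = B + B * (Es - 1) by ring.
    by rewrite lerD2l ler_wpM2r // subr_ge0.
  by rewrite ler_pM2l // ler_expR ler_pM2l.
- rewrite dE; set lam := 1 - expR (kappa * sigs).
  pose u := - kappa * (Ks - Khat).
  have key : Es * expR (lam * (- u)) <= Eh.
    apply: (le_trans (ler_wpM2l (ltW Espos) (@conv_ineq _ lam (- u) lam0 lam1))).
    have eu : expR (- u) = A / B.
      by rewrite /u /A /B -expRN -expRD; congr expR; ring.
    have hEh : Eh = (B + A * (Es - 1)) / B.
      by rewrite -hsig mulrC mulKf // lt0r_neq0.
    rewrite eu hEh /lam lamE le_eqVlt; apply/orP; left; apply/eqP.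
    by field; rewrite !lt0r_neq0.
  rewrite -(ler_pM2l ka) -ler_expR.
  have -> : - kappa * (sigs - sighat) = - kappa * sigs + - (- kappa * sighat) by ring.
  have -> : - kappa * ((Ks - Khat) * lam) = - (lam * (- u)) by rewrite /u; ring.
  rewrite expRD !expRN -/Es -/Eh.
  by rewrite ler_pdivrMr // mulrC ler_pdivlMr ?expR_gt0.
- rewrite dE ler_wpM2r //.
  have hB2 : B <= expR (- kappa * (Khat + sigall)).
    rewrite mulrDr expRD; apply: le_trans H1; rewrite lerDl.
    by apply: mulr_ge0; [exact: ltW | rewrite subr_ge0].
  move: hB2; rewrite /B ler_expR ler_pM2l // => h.
  lra.
- apply: ler_wpM2l; first exact: sig0.
  rewrite lerD2l lerN2 ler_expR ler_nM2l //.
Qed.
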